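(* Let $E:[0,\infty)\times\mathbb{R}^2\to\mathbb{R}^2$ and $b:[0,\infty)\times\mathbb{R}^2\to\mathbb{R}$ be continuous with $b$ nowhere vanishing, $B=b\,e_3$, and let $\gamma=1-1/\sqrt2$. Fix $\Delta t>0$, $T>0$, $t^n=n\Delta t$, $N_T=\lfloor T/\Delta t\rfloor$. For each $\varepsilon>0$ let $(x^n_\varepsilon,v^n_\varepsilon)_{0\le n\le N_T}$ be generated (dropping the index $\varepsilon$ inside stages) by: given $(x^n,v^n)$, $$x^{(1)}=x^n+\frac{\gamma\Delta t}{\varepsilon}v^{(1)},\quad v^{(1)}=v^n+\frac{\gamma\Delta t}{\varepsilon}F^{(1)},\quad F^{(1)}=\frac{v^{(1)}}{\varepsilon}\wedge B(t^n,x^n)+E(t^n,x^n);$$ with $\hat t^{(1)}=t^n+\frac{\Delta t}{2\gamma}$ and $\hat x^{(1)}=x^n+\frac{\Delta t}{2\gamma\varepsilon}v^{(1)}$, $$x^{(2)}=x^n+\frac{(1-\gamma)\Delta t}{\varepsilon}v^{(1)}+\frac{\gamma\Delta t}{\varepsilon}v^{(2)},\quad v^{(2)}=v^n+\frac{(1-\gamma)\Delta t}{\varepsilon}F^{(1)}+\frac{\gamma\Delta t}{\varepsilon}F^{(2)},$$ $$F^{(2)}=\frac{v^{(2)}}{\varepsilon}\wedge B(\hat t^{(1)},\hat x^{(1)})+E(\hat t^{(1)},\hat x^{(1)}),$$ and $x^{n+1}=x^{(2)}$, $v^{n+1}=v^{(2)}$. Assume that for every $1\le n\le N_T$ the family $(x^n_\varepsilon,\varepsilon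 v^n_\varepsilon)_{\varepsilon>0}$ is bounded uniformly in $\varepsilon$ and that $(x^0_\varepsilon,\varepsilon v^0_\varepsilon)\to(y^0,0)$ as $\varepsilon\to0$. Then for every $0\le n\le N_T$, $x^n_\varepsilon\to y^n$ as $\varepsilon\to0$, where $(y^n)$ starts from $y^0$ and satisfies $$U^n=U(t^n,y^n),\quad \hat y^{(1)}=y^n+\frac{\Delta t}{2\gamma}U^n,\quad U^{(1)}=U(\hat t^{(1)},\hat y^{(1)}),\quad y^{n+1}=y^n+(1-\gamma)\Delta t\,U^n+\gamma\Delta t\,U^{(1)}.$$
   Context: Vectors of $\mathbb{R}^2$ are identified with vectors $(w_1,w_2,0)$ of $\mathbb{R}^3$, $e_3=(0,0,1)$, and $\wedge$ is the cross product; thus for $w\in\mathbb{R}^2$ and $B=b\,e_3$, $w\wedge B=b\,(w_2,-w_1)\in\mathbb{R}^2$. The guiding-center drift is $U(t,x)=\dfrac{E(t,x)\wedge B(t,x)}{\|B(t,x)\|^2}$. *)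

(* Defs.v *)
From Stdlib Require Import Reals Lra ZArith.
Open Scope R_scope.

Definition vec := (R * R)%type.
Definition vadd (u w : vec) : vec := (fst u + fst w, snd u + snd w).
Definition vsub (u w : vec) : vec := (fst u - fst w, snd u - snd w).
Definition vscale (c : R) (u : vec) : vec := (c * fst u, c * snd u).
Definition vnorm (u : vec) : R := sqrt (fst u ^ 2 + snd u ^ 2).

(* w /\ (b e3) = b (w2, -w1) *)
Definition wedgeB (w : vec) (b : R) : vec := (b * snd w, - (b * fst w)).

(* Guiding-center drift U = (E /\ B) / ||B||^2 with B = b e3, ||B||^2 = b^2 *)
Definition Udrift (E : R -> vec -> vec) (b : R -> vec -> R) (t : R) (x : vec) : vec :=
  vscale (/ (b t x ^ 2)) (wedgeB (E t x) (b t x)).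

Definition gamma : R := 1 - 1 / sqrt 2.

Definition cont_vec (f : R -> vec -> vec) : Prop :=
  forall t x, 0 <= t -> forall e, 0 < e -> exists d, 0 < d /\
    forall t' x', 0 <= t' -> Rabs (t' - t) < d -> vnorm (vsub x' x) < d ->
      vnorm (vsub (f t' x') (f t x)) < e.
Definition cont_scal (f : R -> vec -> R) : Prop :=
  forall t x, 0 <= t -> forall e, 0 < e -> exists d, 0 < d /\
    forall t' x', 0 <= t' -> Rabs (t' - t) < d -> vnorm (vsub x' x) < d ->
      Rabs (f t' x' - f t x) < e.

Definition conv0 (f : R -> vec) (L : vec) : Prop :=
  forall e, 0 < e -> exists d, 0 < d /\
    forall eps, 0 < eps -> eps < d -> vnorm (vsub (f eps) L) < e.

Definition NT (T dt : R) : nat := Z.to_nat (Int_part (T / dt)).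

Fixpoint yseq (E : R -> vec -> vec) (b : R -> vec -> R) (dt : R) (y0 : vec) (n : nat)
  : vec :=
  match n with
  | O => y0
  | S m =>
      let tm := INR m * dt in
      let ym := yseq E b dt y0 m in
      let Um := Udrift E b tm ym in
      let that1 := tm + dt / (2 * gamma) in
      let hy1 := vadd ym (vscale (dt / (2 * gamma)) Um) in
      let U1 := Udrift E b that1 hy1 in
      vadd ym (vadd (vscale ((1 - gamma) * dt) Um) (vscale (gamma * dt) U1))
  end.

Definition scheme_step (E : R -> vec -> vec) (b : R -> vec -> R) (dt eps tn : R)
  (xn vn v1 v2 xn1 vn1 : vec) : Prop :=
  let F1 := vadd (wedgeB (vscale (/ eps) v1) (b tn xn)) (E tn xn) in
  let that1 := tn + dt / (2 * gamma) in
  let hx1 := vadd xn (vscale (dt / (2 * gamma * eps)) v1) in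
  let F2 := vadd (wedgeB (vscale (/ eps) v2) (b that1 hx1)) (E that1 hx1) in
  v1 = vadd vn (vscale (gamma * dt / eps) F1) /\
  v2 = vadd vn (vadd (vscale ((1 - gamma) * dt / eps) F1) (vscale (gamma * dt / eps) F2)) /\
  xn1 = vadd xn (vadd (vscale ((1 - gamma) * dt / eps) v1) (vscale (gamma * dt / eps) v2)) /\
  vn1 = v2.

(* Main.v *)
Require Import Defs.
From Stdlib Require Import Reals.
From Stdlib Require Import Lra Lia Psatz ClassicalEpsilon.
From Coquelicot Require Import Coquelicot.
Open Scope R_scope.

Definition Lm (f : R -> R) (l : R) := filterlim f (at_right 0) (locally l).

Lemma ballR (x e y : R) : ball x e y <-> Rabs (y - x) < e.
Proof. split; intro H; exact H. Qed.

Lemma Lm_intro f l : (forall e, 0 < e -> exists d, 0 < d /\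
   forall eps, 0 < eps -> eps < d -> Rabs (f eps - l) < e) -> Lm f l.
Proof.
  intro H. apply filterlim_locally. intros [e He]. simpl.
  destruct (H e He) as [d [Hd Hf]].
  exists (mkposreal d Hd). intros y Hy Hpos. apply ballR. apply Hf. lra.
  change (Rabs (y - 0) < d) in Hy. rewrite Rminus_0_r in Hy.
  apply Rabs_def2 in Hy. lra.
Qed.

Lemma Lm_elim f l : Lm f l -> forall e, 0 < e -> exists d, 0 < d /\
   forall eps, 0 < eps -> eps < d -> Rabs (f eps - l) < e.
Proof.
  intros H e He. apply filterlim_locally with (eps := mkposreal e He) in H.
  destruct H as [[d Hd] Hf]. exists d. split; auto.
  intros eps H1 H2. apply ballR. apply Hf; auto. apply ballR. simpl.
  rewrite Rminus_0_r, Rabs_right; lra.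
Qed.

Lemma Lplus f g a b : Lm f a -> Lm g b -> Lm (fun e => f e + g e) (a + b).
Proof. intros Hf Hg. exact (filterlim_comp_2 _ _ Rplus Hf Hg (@filterlim_plus _ R_NormedModule a b)). Qed.
Lemma Lmult f g a b : Lm f a -> Lm g b -> Lm (fun e => f e * g e) (a * b).
Proof. intros Hf Hg. exact (filterlim_comp_2 _ _ Rmult Hf Hg (@filterlim_mult R_AbsRing a b)). Qed.
Lemma Lopp f a : Lm f a -> Lm (fun e => - f e) (- a).
Proof. intros Hf. exact (filterlim_comp _ _ _ f Ropp _ _ _ Hf (@filterlim_opp _ R_NormedModule a)). Qed.
Lemma Linv f a : Lm f a -> a <> 0 -> Lm (fun e => / f e) (/ a).
Proof. intros Hf Ha. exact (filterlim_comp _ _ _ f Rinv _ _ _ Hf (filterlim_Rbar_inv (Finite a) ltac:(intro Hq; apply Ha; injection Hq; auto))). Qed.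
Lemma Lconst c : Lm (fun _ => c) c.
Proof. apply filterlim_const. Qed.
Lemma Lid : Lm (fun e => e) 0.
Proof. apply Lm_intro. intros e He. exists e. split; auto. intros. rewrite Rminus_0_r, Rabs_right; lra. Qed.
Lemma Lext f g l : (forall e, 0 < e -> f e = g e) -> Lm f l -> Lm g l.
Proof.
  intros H Hf. apply Lm_intro. intros e He. destruct (Lm_elim _ _ Hf e He) as [d [Hd Hd']].
  exists d. split; auto. intros. rewrite <- H; auto.
Qed.
Lemma Leq f a b : Lm f a -> a = b -> Lm f b.
Proof. intros; subst; auto. Qed.

Ltac lim := unfold Rdiv, Rminus; repeat first [eassumption | apply Lconst | apply Lplus | apply Lmult | apply Lopp | apply Linv | apply Lid].

Lemma abs_fst_le (u : vec) : Rabs (fst u) <= vnorm u.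
Proof.
  unfold vnorm. rewrite <- sqrt_Rsqr_abs. apply sqrt_le_1_alt.
  unfold Rsqr. simpl. nra.
Qed.
Lemma abs_snd_le (u : vec) : Rabs (snd u) <= vnorm u.
Proof.
  unfold vnorm. rewrite <- sqrt_Rsqr_abs. apply sqrt_le_1_alt.
  unfold Rsqr. simpl. nra.
Qed.
Lemma vnorm_le (u : vec) : vnorm u <= Rabs (fst u) + Rabs (snd u).
Proof.
  unfold vnorm. rewrite <- (sqrt_square (Rabs (fst u) + Rabs (snd u))).
  2: { pose proof (Rabs_pos (fst u)); pose proof (Rabs_pos (snd u)); lra. }
  apply sqrt_le_1_alt.
  pose proof (Rabs_pos (fst u)); pose proof (Rabs_pos (snd u)).
  assert (fst u ^ 2 = Rabs (fst u) * Rabs (fst u)) by (rewrite <- Rabs_mult; simpl; rewrite Rmult_1_r; rewrite Rabs_right; nra).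
  assert (snd u ^ 2 = Rabs (snd u) * Rabs (snd u)) by (rewrite <- Rabs_mult; simpl; rewrite Rmult_1_r; rewrite Rabs_right; nra).
  nra.
Qed.

Lemma conv_fst f y : conv0 f y -> Lm (fun e => fst (f e)) (fst y).
Proof.
  intros H. apply Lm_intro. intros e He. destruct (H e He) as [d [Hd Hf]].
  exists d; split; auto. intros eps H1 H2.
  eapply Rle_lt_trans. 2: apply (Hf eps H1 H2). apply (abs_fst_le (vsub (f eps) y)).
Qed.
Lemma conv_snd f y : conv0 f y -> Lm (fun e => snd (f e)) (snd y).
Proof.
  intros H. apply Lm_intro. intros e He. destruct (H e He) as [d [Hd Hf]].
  exists d; split; auto. intros eps H1 H2.
  eapply Rle_lt_trans. 2: apply (Hf eps H1 H2). apply (abs_snd_le (vsub (f eps) y)).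
Qed.
Lemma conv_of f y : Lm (fun e => fst (f e)) (fst y) -> Lm (fun e => snd (f e)) (snd y) -> conv0 f y.
Proof.
  intros H1 H2 e He.
  destruct (Lm_elim _ _ H1 (e/2) ltac:(lra)) as [d1 [Hd1 Hf1]].
  destruct (Lm_elim _ _ H2 (e/2) ltac:(lra)) as [d2 [Hd2 Hf2]].
  exists (Rmin d1 d2). split. apply Rmin_pos; auto.
  intros eps Ha Hb. eapply Rle_lt_trans. apply vnorm_le. simpl.
  pose proof (Rmin_l d1 d2); pose proof (Rmin_r d1 d2).
  pose proof (Hf1 eps Ha ltac:(lra)). pose proof (Hf2 eps Ha ltac:(lra)). lra.
Qed.

Lemma cont_vec_comp (E : R -> vec -> vec) t X y : cont_vec E -> 0 <= t ->
  conv0 X y -> conv0 (fun e => E t (X e)) (E t y).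
Proof.
  intros HE Ht HX e He. destruct (HE t y Ht e He) as [d [Hd Hf]].
  destruct (HX d Hd) as [d' [Hd' Hx]]. exists d'. split; auto.
  intros eps H1 H2. apply Hf; [auto | rewrite Rminus_diag, Rabs_R0; auto | apply Hx; auto].
Qed.
Lemma cont_scal_comp (b : R -> vec -> R) t X y : cont_scal b -> 0 <= t ->
  conv0 X y -> Lm (fun e => b t (X e)) (b t y).
Proof.
  intros HE Ht HX. apply Lm_intro. intros e He. destruct (HE t y Ht e He) as [d [Hd Hf]].
  destruct (HX d Hd) as [d' [Hd' Hx]]. exists d'. split; auto.
  intros eps H1 H2. apply Hf; [auto | rewrite Rminus_diag, Rabs_R0; auto | apply Hx; auto].
Qed.

Lemma stage (c b0 a1 a2 : R) (s1 s2 bb e1 e2 w1 w2 : R -> R) :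
  0 < c -> b0 <> 0 -> Lm s1 0 -> Lm s2 0 -> Lm bb b0 -> Lm e1 a1 -> Lm e2 a2 ->
  (forall e, 0 < e -> e * e * w1 e = s1 e + c * (bb e * w2 e + e1 e)) ->
  (forall e, 0 < e -> e * e * w2 e = s2 e + c * (- (bb e * w1 e) + e2 e)) ->
  Lm w1 (a2 / b0) /\ Lm w2 (- a1 / b0).
Proof.
  intros Hc Hb0 Hs1 Hs2 Hbb He1 He2 H1 H2.
  assert (HD : forall e, 0 < e -> e*e*e*e + c*c*(bb e * bb e) <> 0).
  { intros e He. assert (0 < e*e) by nra. assert (0 < e*e*e) by nra. assert (0 < e*e*e*e) by nra.
    assert (0 <= c*c*(bb e * bb e)) by (apply Rmult_le_pos; nra). lra. }
  assert (HD0 : 0*0*0*0 + c*c*(b0*b0) <> 0).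
  { intro Hz. apply Hb0. assert (0 < c*c) by nra. assert (b0*b0 = 0) by nra. nra. }
  split.
  - apply (Lext (fun e => (e*e*(s1 e + c*e1 e) + c*bb e*(s2 e + c*e2 e)) * / (e*e*e*e + c*c*(bb e * bb e)))).
    { intros e He. specialize (HD e He). apply (Rmult_eq_reg_r (e*e*e*e + c*c*(bb e * bb e))); auto.
      rewrite Rmult_assoc, Rinv_l; auto. rewrite Rmult_1_r.
      assert (Hq : w1 e * (e*e*e*e + c*c*(bb e * bb e)) - (e*e*(s1 e + c*e1 e) + c*bb e*(s2 e + c*e2 e))
         = e*e*(e*e*w1 e - (s1 e + c*(bb e*w2 e + e1 e))) + c*bb e*(e*e*w2 e - (s2 e + c*(-(bb e*w1 e) + e2 e)))) by ring.
      rewrite H1, H2 in Hq; auto. lra. }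
    eapply Leq. lim. field. split; auto. lra.
  - apply (Lext (fun e => (e*e*(s2 e + c*e2 e) - c*bb e*(s1 e + c*e1 e)) * / (e*e*e*e + c*c*(bb e * bb e)))).
    { intros e He. specialize (HD e He). apply (Rmult_eq_reg_r (e*e*e*e + c*c*(bb e * bb e))); auto.
      rewrite Rmult_assoc, Rinv_l; auto. rewrite Rmult_1_r.
      assert (Hq : w2 e * (e*e*e*e + c*c*(bb e * bb e)) - (e*e*(s2 e + c*e2 e) - c*bb e*(s1 e + c*e1 e))
         = e*e*(e*e*w2 e - (s2 e + c*(-(bb e*w1 e) + e2 e))) - c*bb e*(e*e*w1 e - (s1 e + c*(bb e*w2 e + e1 e)))) by ring.
      rewrite H1, H2 in Hq; auto. lra. }
    eapply Leq. lim. field. split; auto. lra.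
Qed.

Lemma gamma_pos : 0 < gamma /\ gamma < 1.
Proof.
  unfold gamma. assert (H1 : 1 < sqrt 2).
  { rewrite <- sqrt_1. apply sqrt_lt_1_alt. lra. }
  assert (H2 : / sqrt 2 * sqrt 2 = 1) by (field; lra).
  assert (0 < / sqrt 2) by (apply Rinv_0_lt_compat; lra).
  unfold Rdiv. rewrite Rmult_1_l. split; nra.
Qed.

Theorem proposition3p3
  (E : R -> vec -> vec) (b : R -> vec -> R)
  (HE : cont_vec E) (Hb : cont_scal b)
  (Hbnz : forall t x, 0 <= t -> b t x <> 0)
  (dt T : R) (Hdt : 0 < dt) (HT : 0 < T)
  (x v : R -> nat -> vec) (y0 : vec)
  (Hscheme : forall eps n, 0 < eps -> (n < NT T dt)%nat ->
     exists v1 v2, scheme_step E b dt eps (INR n * dt)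
       (x eps n) (v eps n) v1 v2 (x eps (S n)) (v eps (S n)))
  (Hbdd : forall n, (1 <= n <= NT T dt)%nat -> exists M, forall eps, 0 < eps ->
     vnorm (x eps n) <= M /\ vnorm (vscale eps (v eps n)) <= M)
  (Hx0 : conv0 (fun eps => x eps 0%nat) y0)
  (Hv0 : conv0 (fun eps => vscale eps (v eps 0%nat)) (0, 0)) :
  forall n, (n <= NT T dt)%nat -> conv0 (fun eps => x eps n) (yseq E b dt y0 n).
Proof.
  destruct gamma_pos as [Hg Hg1].
  assert (main : forall n, (n <= NT T dt)%nat -> conv0 (fun eps => x eps n) (yseq E b dt y0 n)
     /\ conv0 (fun eps => vscale eps (v eps n)) (0,0)).
  2: { intros n Hn; apply main; auto. }
  induction n as [|n IH]; intros Hn.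
  { simpl. split; auto. }
  destruct (IH ltac:(lia)) as [IHx IHv]. clear IH.
  assert (Hlt : (n < NT T dt)%nat) by lia.
  assert (Htn : 0 <= INR n * dt) by (pose proof (pos_INR n); nra).
  assert (Hex : forall eps, exists p : vec * vec, 0 < eps -> scheme_step E b dt eps (INR n * dt)
     (x eps n) (v eps n) (fst p) (snd p) (x eps (S n)) (v eps (S n))).
  { intro eps. destruct (Rlt_dec 0 eps) as [Hp|Hp].
    - destruct (Hscheme eps n Hp Hlt) as [v1 [v2 H]]. exists (v1, v2). intros _. exact H.
    - exists ((0,0),(0,0)). intro; contradiction. }
  pose (P := fun eps => proj1_sig (constructive_indefinite_description _ (Hex eps))).
  assert (HP : forall eps, 0 < eps -> scheme_step E b dt eps (INR n * dt)
     (x eps n) (v eps n) (fst (P eps)) (snd (P eps)) (x eps (S n)) (v eps (S n))).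
  { intro eps. exact (proj2_sig (constructive_indefinite_description _ (Hex eps))). }
  clearbody P. clear Hex.
  unfold scheme_step in HP. cbv zeta in HP.
  set (tn := INR n * dt) in *.
  set (yn := yseq E b dt y0 n) in *.
  set (th := tn + dt / (2 * gamma)).
  assert (Hth : 0 <= th) by (unfold th; assert (0 < dt / (2*gamma)) by (apply Rdiv_lt_0_compat; lra); lra).
  assert (Hgn : gamma <> 0) by lra.
  assert (Lxn1 := conv_fst _ _ IHx). assert (Lxn2 := conv_snd _ _ IHx).
  assert (Ls1 := conv_fst _ _ IHv). assert (Ls2 := conv_snd _ _ IHv). simpl in Ls1, Ls2.
  assert (HEn := cont_vec_comp E tn _ _ HE Htn IHx).
  assert (LE1 := conv_fst _ _ HEn). assert (LE2 := conv_snd _ _ HEn).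
  assert (Lb := cont_scal_comp b tn _ _ Hb Htn IHx).
  assert (Hb0 := Hbnz tn yn Htn).
  destruct (stage (gamma*dt) (b tn yn) (fst (E tn yn)) (snd (E tn yn))
     (fun e => fst (vscale e (v e n))) (fun e => snd (vscale e (v e n)))
     (fun e => b tn (x e n)) (fun e => fst (E tn (x e n))) (fun e => snd (E tn (x e n)))
     (fun e => / e * fst (fst (P e))) (fun e => / e * snd (fst (P e))))
     as [Lw1 Lw2]; auto.
  { apply Rmult_lt_0_compat; lra. }
  { intros e He. destruct (HP e He) as [H1 _]. apply (f_equal fst) in H1.
    unfold vadd, vscale, wedgeB in H1. simpl in H1. simpl. rewrite H1. field. lra. }
  { intros e He. destruct (HP e He) as [H1 _]. apply (f_equal snd) in H1.
    unfold vadd, vscale, wedgeB in H1. simpl in H1. simpl. rewrite H1. field. lra. }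
  cbv beta in *.
  pose (hx := fun e => vadd (x e n) (vscale (dt / (2 * gamma * e)) (fst (P e)))).
  pose (hy := vadd yn (vscale (dt / (2 * gamma)) (Udrift E b tn yn))).
  assert (Hhx : conv0 hx hy).
  { apply conv_of.
    - apply (Lext (fun e => fst (x e n) + dt/(2*gamma) * (/e * fst (fst (P e))))).
      { intros e He; unfold hx, vadd, vscale; simpl; field; lra. }
      eapply Leq. lim. unfold hy, Udrift, vadd, vscale, wedgeB; simpl; field; auto.
    - apply (Lext (fun e => snd (x e n) + dt/(2*gamma) * (/e * snd (fst (P e))))).
      { intros e He; unfold hx, vadd, vscale; simpl; field; lra. }
      eapply Leq. lim. unfold hy, Udrift, vadd, vscale, wedgeB; simpl; field; auto. }
  assert (HE2 := cont_vec_comp E th _ _ HE Hth Hhx).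
  assert (LF1 := conv_fst _ _ HE2). assert (LF2 := conv_snd _ _ HE2).
  assert (Lb2 := cont_scal_comp b th _ _ Hb Hth Hhx).
  assert (Hb02 := Hbnz th hy Hth).
  cbv beta in *.
  assert (Ls1' : Lm (fun e => e * fst (v e n) + (1-gamma)*dt*(b tn (x e n) * (/e * snd (fst (P e))) + fst (E tn (x e n)))) 0).
  { eapply Leq. lim. field. auto. }
  assert (Ls2' : Lm (fun e => e * snd (v e n) + (1-gamma)*dt*(- (b tn (x e n) * (/e * fst (fst (P e)))) + snd (E tn (x e n)))) 0).
  { eapply Leq. lim. field. auto. }
  destruct (stage (gamma*dt) (b th hy) (fst (E th hy)) (snd (E th hy))
     _ _
     (fun e => b th (hx e)) (fun e => fst (E th (hx e))) (fun e => snd (E th (hx e)))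
     (fun e => / e * fst (snd (P e))) (fun e => / e * snd (snd (P e)))
     ltac:(apply Rmult_lt_0_compat; lra) Hb02 Ls1' Ls2' Lb2 LF1 LF2)
     as [Lu1 Lu2].
  { intros e He. destruct (HP e He) as [_ [H1 _]]. apply (f_equal fst) in H1.
    unfold vadd, vscale, wedgeB in H1. simpl in H1. unfold hx, th, vadd, vscale, wedgeB. simpl. rewrite H1. field. lra. }
  { intros e He. destruct (HP e He) as [_ [H1 _]]. apply (f_equal snd) in H1.
    unfold vadd, vscale, wedgeB in H1. simpl in H1. unfold hx, th, vadd, vscale, wedgeB. simpl. rewrite H1. field. lra. }
  change (yseq E b dt y0 (S n)) with
    (vadd yn (vadd (vscale ((1-gamma)*dt) (Udrift E b tn yn)) (vscale (gamma*dt) (Udrift E b th hy)))).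
  split; apply conv_of.
  - apply (Lext (fun e => fst (x e n) + (1-gamma)*dt * (/e * fst (fst (P e))) + gamma*dt * (/e * fst (snd (P e))))).
    { intros e He. destruct (HP e He) as [_ [_ [H3 _]]]. rewrite H3. unfold vadd, vscale; simpl; field; lra. }
    eapply Leq. lim. unfold Udrift, vadd, vscale, wedgeB; simpl; field; auto.
  - apply (Lext (fun e => snd (x e n) + (1-gamma)*dt * (/e * snd (fst (P e))) + gamma*dt * (/e * snd (snd (P e))))).
    { intros e He. destruct (HP e He) as [_ [_ [H3 _]]]. rewrite H3. unfold vadd, vscale; simpl; field; lra. }
    eapply Leq. lim. unfold Udrift, vadd, vscale, wedgeB; simpl; field; auto.
  - apply (Lext (fun e => e * e * (/e * fst (snd (P e))))).
    { intros e He. destruct (HP e He) as [_ [_ [_ H4]]]. rewrite H4. unfold vscale; simpl; field; lra. }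
    eapply Leq. lim. simpl; ring.
  - apply (Lext (fun e => e * e * (/e * snd (snd (P e))))).
    { intros e He. destruct (HP e He) as [_ [_ [_ H4]]]. rewrite H4. unfold vscale; simpl; field; lra. }
    eapply Leq. lim. simpl; ring.
Qed.
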